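(* Let $n\ge2$, $0<b_1\le\dots\le b_n$, and define $S>0$ by $S^{\frac{1}{n-1}}=\frac{2^{n+6}}{3}20^{\frac{n-2}{2}}\max_{1\le k\le n}20^{\frac{k(k-1)}{2}}\frac{b_1\cdots b_n}{b_k^n}$. Let $0<a_1\le\dots\le a_n$ satisfy $a_1\cdots a_n=b_1\cdots b_n$, $\frac{a_k}{a_{k-1}}<20$ for all $2\le k\le n-1$, and $\frac{a_n}{a_k}>20^{-\frac{n-2}{2}}S^{\frac{1}{n-1}}$ for all $1\le k\le n-1$. Then $b_k>2a_k$ for all $1\le k\le n-1$. *)

(* Defs.v *)
(* concrete reals R. Sequences indexed from 1 via nat -> R. *)
From Stdlib Require Import Reals Lra Lia.
Open Scope R_scope.

Fixpoint prod_1n (x : nat -> R) (n : nat) : R :=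
  match n with
  | O => 1
  | S m => prod_1n x m * x n
  end.

Fixpoint max_1n (f : nat -> R) (n : nat) : R :=
  match n with
  | O => f O (* unused: n >= 1 in all uses *)
  | S O => f 1%nat
  | S m => Rmax (max_1n f m) (f n)
  end.

Definition S_root (n : nat) (b : nat -> R) : R :=
  (2 ^ (n + 6) / 3) * Rpower 20 ((INR n - 2) / 2) *
  max_1n (fun k => Rpower 20 (INR k * (INR k - 1) / 2) * prod_1n b n / b k ^ n) n.

Definition S_of (n : nat) (b : nat -> R) : R :=
  Rpower (S_root n b) (INR n - 1).

(* Main.v *)
Require Import Defs.
From Stdlib Require Import Reals Lra Lia.
Open Scope R_scope.

Lemma Rpower_pos x y : 0 < Rpower x y.
Proof. unfold Rpower; apply exp_pos. Qed.

Lemma pos_seq (n : nat) (a : nat -> R) :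
  0 < a 1%nat ->
  (forall k, (1 <= k)%nat -> (k < n)%nat -> a k <= a (S k)) ->
  forall j, (1 <= j)%nat -> (j <= n)%nat -> 0 < a j.
Proof.
  intros H1 Hm j. induction j as [|j IH]; intros Hj1 Hjn; [lia|].
  destruct j as [|j]; [exact H1|].
  specialize (IH ltac:(lia) ltac:(lia)).
  specialize (Hm (S j) ltac:(lia) ltac:(lia)). lra.
Qed.

Lemma mono_seq (n : nat) (a : nat -> R) :
  (forall k, (1 <= k)%nat -> (k < n)%nat -> a k <= a (S k)) ->
  forall d j, (1 <= j)%nat -> (j + d <= n)%nat -> a j <= a (j + d)%nat.
Proof.
  intros Hm d. induction d as [|d IH]; intros j Hj Hjd.
  - rewrite Nat.add_0_r; lra.
  - specialize (IH j Hj ltac:(lia)). rewrite Nat.add_succ_r.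
    specialize (Hm (j+d)%nat ltac:(lia) ltac:(lia)). lra.
Qed.

Lemma prod_pos (x : nat -> R) m :
  (forall j, (1 <= j)%nat -> (j <= m)%nat -> 0 < x j) -> 0 < prod_1n x m.
Proof.
  induction m as [|m IH]; intros H; simpl; [lra|].
  apply Rmult_lt_0_compat; [apply IH; intros; apply H; lia| apply H; lia].
Qed.

Lemma max_ge f m k : (1 <= k)%nat -> (k <= m)%nat -> f k <= max_1n f m.
Proof.
  induction m as [|m IH]; intros H1 H2; [lia|].
  destruct m as [|m].
  - replace k with 1%nat by lia. simpl. lra.
  - change (max_1n f (S (S m))) with (Rmax (max_1n f (S m)) (f (S (S m)))).
    destruct (Nat.eq_dec k (S (S m))) as [->|Hne].
    + apply Rmax_r.
    + eapply Rle_trans; [apply IH; lia| apply Rmax_l].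
Qed.

Lemma growth (n : nat) (a : nat -> R) :
  (forall j, (1 <= j)%nat -> (j <= n)%nat -> 0 < a j) ->
  (forall k, (2 <= k)%nat -> (k <= n - 1)%nat -> a k / a (k - 1)%nat < 20) ->
  forall d j, (1 <= j)%nat -> (j + d <= n - 1)%nat -> a (j + d)%nat <= a j * 20 ^ d.
Proof.
  intros Hp Hr d. induction d as [|d IH]; intros j Hj Hjd.
  - rewrite Nat.add_0_r; simpl; lra.
  - specialize (IH j Hj ltac:(lia)). rewrite Nat.add_succ_r.
    specialize (Hr (S (j+d)) ltac:(lia) ltac:(lia)).
    replace (S (j + d) - 1)%nat with (j+d)%nat in Hr by lia.
    assert (Hpos : 0 < a (j+d)%nat) by (apply Hp; lia).
    apply (Rmult_lt_compat_r (a (j+d)%nat)) in Hr; [|lra].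
    unfold Rdiv in Hr. rewrite Rmult_assoc, Rinv_l in Hr by lra.
    simpl. lra.
Qed.

Lemma pow_S' x m : x ^ (S m) = x ^ m * x.
Proof. simpl; ring. Qed.

Lemma low (n : nat) (a : nat -> R) k :
  (forall j, (1 <= j)%nat -> (j <= n)%nat -> 0 < a j) ->
  (forall k, (2 <= k)%nat -> (k <= n - 1)%nat -> a k / a (k - 1)%nat < 20) ->
  (1 <= k)%nat -> (k <= n - 1)%nat ->
  forall m, (m <= k)%nat ->
  a k ^ m <= prod_1n a m * Rpower 20 (INR m * (2 * INR k - INR m - 1) / 2).
Proof.
  intros Hp Hr Hk1 Hk2 m. induction m as [|m IH]; intros Hm.
  - replace (INR 0 * (2 * INR k - INR 0 - 1) / 2) with 0 by (simpl; field).
    rewrite Rpower_O by lra. simpl. lra.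
  - specialize (IH ltac:(lia)).
    replace (INR (S m) * (2 * INR k - INR (S m) - 1) / 2) with
      (INR m * (2 * INR k - INR m - 1) / 2 + INR (k - S m)) by
      (rewrite minus_INR by lia; rewrite S_INR; field).
    rewrite Rpower_plus, Rpower_pow by lra.
    pose proof (growth n a Hp Hr (k - S m) (S m) ltac:(lia) ltac:(lia)) as G.
    replace (S m + (k - S m))%nat with k in G by lia.
    change (prod_1n a (S m)) with (prod_1n a m * a (S m)).
    rewrite pow_S'.
    assert (0 <= a k ^ m) by (apply pow_le; apply Rlt_le, Hp; lia).
    assert (0 <= a k) by (apply Rlt_le, Hp; lia).
    apply Rle_trans with
      ((prod_1n a m * Rpower 20 (INR m * (2 * INR k - INR m - 1) / 2)) *
       (a (S m) * 20 ^ (k - S m))).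
    + apply Rmult_le_compat; assumption.
    + right; ring.
Qed.

Lemma high (n : nat) (a : nat -> R) k :
  (forall j, (1 <= j)%nat -> (j <= n)%nat -> 0 < a j) ->
  (forall k, (1 <= k)%nat -> (k < n)%nat -> a k <= a (S k)) ->
  (forall k, (2 <= k)%nat -> (k <= n - 1)%nat -> a k / a (k - 1)%nat < 20) ->
  (1 <= k)%nat -> (k <= n - 1)%nat ->
  forall d, (k + d <= n - 1)%nat ->
  a k ^ (k + d) <= prod_1n a (k + d) * Rpower 20 (INR k * (INR k - 1) / 2).
Proof.
  intros Hp Hm Hr Hk1 Hk2 d. induction d as [|d IH]; intros Hd.
  - rewrite Nat.add_0_r.
    pose proof (low n a k Hp Hr Hk1 Hk2 k (le_n k)) as L.
    replace (INR k * (2 * INR k - INR k - 1) / 2) with (INR k * (INR k - 1) / 2) in L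
      by field. exact L.
  - specialize (IH ltac:(lia)). rewrite Nat.add_succ_r.
    change (prod_1n a (S (k + d))) with (prod_1n a (k+d) * a (S (k+d))).
    rewrite pow_S'.
    pose proof (mono_seq n a Hm (S d) k Hk1 ltac:(lia)) as M.
    rewrite Nat.add_succ_r in M.
    assert (0 <= a k ^ (k+d)) by (apply pow_le; apply Rlt_le, Hp; lia).
    assert (0 <= a k) by (apply Rlt_le, Hp; lia).
    apply Rle_trans with
      ((prod_1n a (k + d) * Rpower 20 (INR k * (INR k - 1) / 2)) * a (S (k+d))).
    + apply Rmult_le_compat; assumption.
    + right; ring.
Qed.

Theorem lemma3p6 (n : nat) (a b : nat -> R) :
  (2 <= n)%nat ->
  0 < b 1%nat ->
  (forall k, (1 <= k)%nat -> (k < n)%nat -> b k <= b (S k)) ->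
  0 < a 1%nat ->
  (forall k, (1 <= k)%nat -> (k < n)%nat -> a k <= a (S k)) ->
  prod_1n a n = prod_1n b n ->
  (forall k, (2 <= k)%nat -> (k <= n - 1)%nat -> a k / a (k - 1)%nat < 20) ->
  (forall k, (1 <= k)%nat -> (k <= n - 1)%nat ->
     a n / a k > Rpower 20 (- ((INR n - 2) / 2)) * Rpower (S_of n b) (1 / (INR n - 1))) ->
  forall k, (1 <= k)%nat -> (k <= n - 1)%nat -> b k > 2 * a k.
Proof.
  intros Hn Hb1 Hbm Ha1 Ham HP Hr Hbig k Hk1 Hk2.
  apply Rnot_le_gt; intro Hle.
  pose proof (pos_seq n a Ha1 Ham) as Hpa.
  pose proof (pos_seq n b Hb1 Hbm) as Hpb.
  assert (HPb : 0 < prod_1n b n) by (apply prod_pos; exact Hpb).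
  set (f := fun k => Rpower 20 (INR k * (INR k - 1) / 2) * prod_1n b n / b k ^ n).
  set (M := max_1n f n).
  assert (Hf1 : 0 < f 1%nat).
  { unfold f. unfold Rdiv. apply Rmult_lt_0_compat;
      [apply Rmult_lt_0_compat; [apply Rpower_pos|exact HPb]|].
    apply Rinv_0_lt_compat, pow_lt; exact Hb1. }
  assert (HM1 : f 1%nat <= M) by (apply max_ge; lia).
  assert (HMk : f k <= M) by (apply max_ge; lia).
  assert (HnR : 2 <= INR n) by (apply le_INR in Hn; simpl in Hn; lra).
  set (e := (INR n - 2) / 2).
  assert (HSr : 0 < S_root n b).
  { unfold S_root. fold f. fold M. fold e.
    apply Rmult_lt_0_compat; [apply Rmult_lt_0_compat|lra].
    - unfold Rdiv; apply Rmult_lt_0_compat; [apply pow_lt; lra|lra].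
    - apply Rpower_pos. }
  assert (HS : Rpower (S_of n b) (1 / (INR n - 1)) = S_root n b).
  { unfold S_of. rewrite Rpower_mult.
    replace ((INR n - 1) * (1 / (INR n - 1))) with 1 by (field; lra).
    apply Rpower_1; exact HSr. }
  assert (Hee : Rpower 20 (- e) * Rpower 20 e = 1).
  { rewrite <- Rpower_plus. replace (- e + e) with 0 by ring. apply Rpower_O; lra. }
  assert (HK : Rpower 20 (- e) * S_root n b = 2 ^ (n + 6) / 3 * M).
  { unfold S_root. fold f. fold M. fold e.
    transitivity (2 ^ (n + 6) / 3 * M * (Rpower 20 (- e) * Rpower 20 e)); [ring|].
    rewrite Hee; ring. }
  specialize (Hbig k Hk1 Hk2). fold e in Hbig. rewrite HS, HK in Hbig.
  assert (Hak : 0 < a k) by (apply Hpa; lia).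
  assert (Han : 0 < a n) by (apply Hpa; lia).
  assert (Hbk : 0 < b k) by (apply Hpb; lia).
  set (c := Rpower 20 (INR k * (INR k - 1) / 2)).
  assert (Hc : 0 < c) by apply Rpower_pos.
  set (Q := prod_1n a (n - 1)).
  assert (HQ : prod_1n a n = Q * a n).
  { unfold Q. destruct n as [|n']; [lia|].
    replace (S n' - 1)%nat with n' by lia. reflexivity. }
  assert (HcQ : a k ^ (n - 1) <= Q * c).
  { pose proof (high n a k Hpa Ham Hr Hk1 Hk2 (n - 1 - k) ltac:(lia)) as H.
    replace (k + (n - 1 - k))%nat with (n - 1)%nat in H by lia. exact H. }
  assert (Hpw : a k ^ n = a k ^ (n - 1) * a k).
  { rewrite <- pow_S'. f_equal; lia. }
  assert (Hbn : b k ^ n <= 2 ^ n * a k ^ n).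
  { rewrite <- Rpow_mult_distr. apply pow_incr; lra. }
  assert (Hbnp : 0 < b k ^ n) by (apply pow_lt; lra).
  assert (H2n : 0 < 2 ^ n) by (apply pow_lt; lra).
  assert (Hakn1 : 0 < a k ^ (n - 1)) by (apply pow_lt; lra).
  assert (HT : a n / (2 ^ n * a k) <= f k).
  { unfold f. fold c. rewrite <- HP, HQ.
    apply Rle_trans with (c * (Q * a n) / (2 ^ n * a k ^ n)).
    - apply Rle_trans with (a k ^ (n - 1) * a n / (2 ^ n * a k ^ n)).
      + right. rewrite Hpw. field. lra.
      + unfold Rdiv. apply Rmult_le_compat_r.
        * left; apply Rinv_0_lt_compat; apply Rmult_lt_0_compat; [lra|apply pow_lt; lra].
        * replace (c * (Q * a n)) with ((Q * c) * a n) by ring.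
          apply Rmult_le_compat_r; lra.
    - unfold Rdiv. apply Rmult_le_compat_l.
      + left; apply Rmult_lt_0_compat; [lra|]. rewrite <- HQ, HP; exact HPb.
      + apply Rinv_le_contravar; assumption. }
  assert (HK0 : 0 < 2 ^ (n + 6) / 3) by (unfold Rdiv; apply Rmult_lt_0_compat; [apply pow_lt|]; lra).
  assert (Hfin : 2 ^ (n + 6) / 3 * (a n / (2 ^ n * a k)) <= 2 ^ (n + 6) / 3 * M)
    by (apply Rmult_le_compat_l; lra).
  replace (2 ^ (n + 6) / 3 * (a n / (2 ^ n * a k))) with (64 / 3 * (a n / a k)) in Hfin
    by (rewrite pow_add; simpl; field; lra).
  assert (0 < a n / a k) by (unfold Rdiv; apply Rmult_lt_0_compat; [lra|apply Rinv_0_lt_compat; lra]).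
  lra.
Qed.
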